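(* Let $0<\kappa<1$, $0<h<\frac12$, $h_n=h2^{-n-1}$, and $a,b,c,C\ge0$. Let $\nu_n,\zeta_n,\eta_n,\epsilon_n$ ($n\ge0$) be non-negative sequences with $\nu_n\le C\kappa^{-2b}h_n^{-2a}\zeta_n^c(\zeta_n+\eta_n)\epsilon_n$ for $n\ge0$, and, for $n\ge1$, $\zeta_n\le\zeta_{n-1}+\nu_{n-1}$, $\eta_n\le\eta_{n-1}+\nu_{n-1}$, $\epsilon_n\le\nu_{n-1}\epsilon_{n-1}$, with $\zeta_0=\zeta\ge1$, $\eta_0=0$, $\epsilon_0=\epsilon$. Then there is $C'=C'(C,a,b,c)>0$ such that if for some $\varsigma\le1$ $$\epsilon<\frac{\varsigma}{C'}\kappa^{2b+1}h^{2a+1}\zeta^{-c-2},$$ then for all $n\ge0$: $\epsilon_n\le(\kappa h\zeta^{-1})^{2^n-1}\epsilon$ and $\eta_n<\varsigma\zeta_n^{-1}$. *)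

(* Defs.v *)
From Stdlib Require Import Reals.
Open Scope R_scope.

(* Real power x^y for x >= 0 and real exponent y, with the usual
   conventions 0^y = 0 for y <> 0 and 0^0 = 1 (Stdlib's Rpower is only
   meaningful for x > 0). *)
Definition rpow (x y : R) : R :=
  if Req_EM_T x 0 then (if Req_EM_T y 0 then 1 else 0) else Rpower x y.

Definition hseq (h : R) (n : nat) : R := h / 2 ^ (S n).

(* Main.v *)
Require Import Defs.
From Stdlib Require Import Reals Lra Lia.
Open Scope R_scope.
Lemma Rpower_pos' x y : 0 < Rpower x y.
Proof. unfold Rpower. apply exp_pos. Qed.

Lemma rpow_pos x y : 0 < x -> rpow x y = Rpower x y.
Proof. intros H. unfold rpow. destruct (Req_EM_T x 0); [lra|reflexivity]. Qed.

Lemma rpow_hseq h a n : 0 < h ->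
  Rpower (hseq h n) (- (2 * a)) = Rpower h (- (2 * a)) * (Rpower 2 (2 * a)) ^ (S n).
Proof.
  intros Hh. unfold hseq. unfold Rdiv.
  assert (H2 : 0 < 2 ^ S n) by (apply pow_lt; lra).
  rewrite <- Rpower_mult_distr; [|lra|apply Rinv_0_lt_compat; lra].
  f_equal.
  assert (Rpower (/ 2 ^ S n) (- (2 * a)) = Rpower (2 ^ S n) (2 * a)).
  { unfold Rpower. rewrite ln_Rinv by lra. f_equal. ring. }
  rewrite H. rewrite <- (Rpower_pow (S n) 2) by lra. rewrite Rpower_mult.
  rewrite <- Rpower_pow by apply Rpower_pos'. rewrite Rpower_mult. f_equal. ring.
Qed.

Lemma rpow_le x z c : 0 <= c -> 0 <= x -> x <= 2 * z -> 0 < z ->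
  rpow x c <= Rpower 2 c * Rpower z c.
Proof.
  intros Hc Hx Hxz Hz. rewrite Rpower_mult_distr by lra.
  unfold rpow. destruct (Req_EM_T x 0).
  - destruct (Req_EM_T c 0).
    + subst. rewrite Rpower_O by lra. lra.
    + left. apply Rpower_pos'.
  - apply Rle_Rpower_l; lra.
Qed.
Lemma pow_le1 (q : R) (k : nat) : 0 <= q <= 1 -> q ^ k <= 1.
Proof. intros H; induction k; simpl; [lra|]. assert (0 <= q^k) by (apply pow_le; lra). nra. Qed.

Lemma nat_pow_ge (n : nat) : (n <= 2 ^ n - 1)%nat.
Proof. induction n; simpl; [lia|]. assert (1 <= 2 ^ n)%nat by (apply Nat.pow_le_mono_r with (a:=2%nat) (b:=0%nat); lia). simpl in *. lia. Qed.

Lemma Q_le (q : R) (n : nat) : 0 <= q <= 1/2 -> q ^ (2^n - 1) <= (1/2)^n.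
Proof.
  intros H. replace (2^n-1)%nat with (n + (2^n-1-n))%nat by (pose proof (nat_pow_ge n); lia).
  rewrite pow_add.
  assert (q^n <= (1/2)^n) by (apply pow_incr; lra).
  assert (q^(2^n-1-n) <= 1) by (apply pow_le1; lra).
  assert (0 <= q^n) by (apply pow_le; lra).
  assert (0 <= q^(2^n-1-n)) by (apply pow_le; lra).
  nra.
Qed.

Lemma core (K A q z e : R) (nu zeta eta eps : nat -> R) :
  0 <= K -> 1 <= A -> 0 <= q <= 1/2 -> 1 <= z -> 0 <= e ->
  zeta 0%nat <= z -> eta 0%nat = 0 -> eps 0%nat = e ->
  (forall n, 0 <= eps n) -> (forall n, 0 <= nu n) ->
  (forall n, zeta n <= 2 * z -> eta n <= z -> nu n <= K * A ^ (S n) * eps n) ->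
  (forall n, zeta (S n) <= zeta n + nu n) ->
  (forall n, eta (S n) <= eta n + nu n) ->
  (forall n, eps (S n) <= nu n * eps n) ->
  K * e * A ^ 2 <= q ->
  forall n, eps n * A ^ n <= q ^ (2 ^ n - 1) * e /\
    zeta n <= z + K * A * e * (2 - 2 * (1/2) ^ n) /\
    eta n <= K * A * e * (2 - 2 * (1/2) ^ n).
Proof.
  intros HK HA Hq Hz He Hz0 Het0 Hep0 Hpos Hnupos Hnu Hzs Hes Heps HF.
  assert (HD : K * A * e <= q / A).
  { assert (0 < A) by lra. apply (Rmult_le_reg_r A); [lra|].
    replace (q / A * A) with q by (field; lra). nra. }
  assert (HqA : q / A <= q).
  { assert (0 < A) by lra. apply (Rmult_le_reg_r A); [lra|].
    replace (q / A * A) with q by (field; lra). nra. }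
  assert (HD0 : 0 <= K * A * e) by (apply Rmult_le_pos; [apply Rmult_le_pos|]; lra).
  induction n as [|n IH].
  - simpl. rewrite Hep0. lra.
  - destruct IH as [IH1 [IH2 IH3]].
    set (h := (1/2)^n) in *.
    assert (Hh0 : 0 <= h) by (apply pow_le; lra).
    assert (Hh1 : h <= 1) by (apply pow_le1; lra).
    set (Q := q ^ (2^n-1)) in *.
    assert (HQ : Q <= h) by (apply Q_le; lra).
    assert (HQ0 : 0 <= Q) by (apply pow_le; lra).
    assert (HAn : 1 <= A ^ n) by (apply pow_R1_Rle; lra).
    assert (Hnu' : nu n <= K * A * Q * e).
    { assert (nu n <= K * A ^ S n * eps n) by (apply Hnu; nra).
      simpl in H. 
      assert (K * (A * A ^ n) * eps n = K * A * (eps n * A ^ n)) by ring.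
      assert (0 <= K * A) by nra. nra. }
    assert (Hnu0 : 0 <= nu n).
    { apply Hnupos. }
    split; [|split].
    + replace (2 ^ S n - 1)%nat with (S ((2^n - 1) * 2)) by
        (assert (1 <= 2 ^ n)%nat by (apply Nat.pow_le_mono_r with (a:=2%nat) (b:=0%nat); lia); simpl; lia).
      rewrite <- (tech_pow_Rmult q), pow_mult. fold Q. simpl pow. 
      specialize (Heps n). specialize (Hpos n).
      assert (H1 : eps (S n) * (A * A^n) <= nu n * (eps n * A ^ n) * A).
      { assert (0 <= A * A^n) by nra. nra. }
      assert (H2 : nu n * (eps n * A ^ n) <= (K * A * Q * e) * (Q * e)).
      { assert (0 <= eps n * A ^ n) by nra. 
        apply Rle_trans with ((K * A * Q * e) * (eps n * A ^ n)). nra.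
        apply Rmult_le_compat_l; [|lra]. nra. }
      assert (H3 : (K * A * Q * e) * (Q * e) * A = (K * e * A^2) * (Q * (Q * 1)) * e) by ring.
      assert (0 <= Q * (Q * 1) * e) by nra.
      assert (H4 : nu n * (eps n * A ^ n) * A <= (K * A * Q * e) * (Q * e) * A)
        by (apply Rmult_le_compat_r; lra).
      assert (H5 : (K * e * A^2) * (Q * (Q * 1) * e) <= q * (Q * (Q * 1) * e))
        by (apply Rmult_le_compat_r; lra).
      eapply Rle_trans; [exact H1|]. eapply Rle_trans; [exact H4|]. rewrite H3.
      replace (q * (Q * (Q * 1)) * e) with (q * (Q * (Q * 1) * e)) by ring.
      replace (K * e * A ^ 2 * (Q * (Q * 1)) * e) with (K * e * A ^ 2 * (Q * (Q * 1) * e)) by ring.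
      exact H5.
    + simpl. fold h. specialize (Hzs n).
      assert (K * A * e * Q <= K * A * e * h) by (apply Rmult_le_compat_l; lra).
      replace (K * A * Q * e) with (K * A * e * Q) in Hnu' by ring. lra.
    + simpl. fold h. specialize (Hes n).
      assert (K * A * e * Q <= K * A * e * h) by (apply Rmult_le_compat_l; lra).
      replace (K * A * Q * e) with (K * A * e * Q) in Hnu' by ring. lra.
Qed.
Theorem lemma8p6 :
  forall C a b c : R, 0 <= C -> 0 <= a -> 0 <= b -> 0 <= c ->
  exists C' : R, 0 < C' /\
  forall (kappa h vs : R) (nu zeta eta eps : nat -> R),
    0 < kappa -> kappa < 1 -> 0 < h -> h < 1 / 2 ->
    (forall n, 0 <= nu n) -> (forall n, 0 <= zeta n) ->
    (forall n, 0 <= eta n) -> (forall n, 0 <= eps n) ->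
    (forall n, nu n <= C * rpow kappa (- (2 * b)) * rpow (hseq h n) (- (2 * a))
                        * rpow (zeta n) c * (zeta n + eta n) * eps n) ->
    (forall n, zeta (S n) <= zeta n + nu n) ->
    (forall n, eta (S n) <= eta n + nu n) ->
    (forall n, eps (S n) <= nu n * eps n) ->
    1 <= zeta 0%nat -> eta 0%nat = 0 ->
    vs <= 1 ->
    eps 0%nat < vs / C' * rpow kappa (2 * b + 1) * rpow h (2 * a + 1)
                  * rpow (zeta 0%nat) (- c - 2) ->
    forall n : nat,
      eps n <= (kappa * h / zeta 0%nat) ^ (2 ^ n - 1) * eps 0%nat /\
      (0 < zeta n -> eta n < vs / zeta n).
Proof.
  intros C a b c HC Ha Hb Hc.
  set (A := Rpower 2 (2 * a)). set (t := Rpower 2 c).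
  assert (HA : 1 <= A).
  { unfold A. rewrite <- (Rpower_O 2) by lra. apply Rle_Rpower; lra. }
  assert (Ht : 0 < t) by apply Rpower_pos'.
  assert (HCp : 0 < 48 * (C + 1) * t * A ^ 2) by (repeat apply Rmult_lt_0_compat; try lra; apply pow_lt; lra).
  exists (48 * (C + 1) * t * A ^ 2). split; [exact HCp|].
  intros kappa h vs nu zeta eta eps Hk Hk1 Hh Hh1 Hnup Hzp Hetp Hepp Hnu Hzs Hes Heps Hz0 Het0 Hvs Hsmall.
  set (C' := 48 * (C + 1) * t * A ^ 2) in *.
  set (z := zeta 0%nat) in *. set (e := eps 0%nat) in *.
  assert (Hzpos : 0 < z) by lra.
  rewrite (rpow_pos kappa) in Hsmall by lra.
  rewrite (rpow_pos h) in Hsmall by lra.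
  rewrite (rpow_pos z) in Hsmall by lra.
  set (rk := Rpower kappa (- (2 * b))). set (rk2 := Rpower kappa (2 * b + 1)) in *.
  set (rh := Rpower h (- (2 * a))). set (rh2 := Rpower h (2 * a + 1)) in *.
  set (rz := Rpower z c). set (rz2 := Rpower z (- c - 2)) in *.
  assert (Hrk : rk * rk2 = kappa).
  { unfold rk, rk2. rewrite <- Rpower_plus. replace (- (2 * b) + (2 * b + 1)) with 1 by ring.
    apply Rpower_1; lra. }
  assert (Hrh : rh * rh2 = h).
  { unfold rh, rh2. rewrite <- Rpower_plus. replace (- (2 * a) + (2 * a + 1)) with 1 by ring.
    apply Rpower_1; lra. }
  assert (Hrz : rz * rz2 = / (z ^ 2)).
  { unfold rz, rz2. rewrite <- Rpower_plus. replace (c + (- c - 2)) with (- INR 2) by (simpl; ring).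
    rewrite Rpower_Ropp, Rpower_pow by lra. reflexivity. }
  assert (Hrkp : 0 < rk) by apply Rpower_pos'.
  assert (Hrhp : 0 < rh) by apply Rpower_pos'.
  assert (Hrzp : 0 < rz) by apply Rpower_pos'.
  assert (Hrk2p : 0 < rk2) by apply Rpower_pos'.
  assert (Hrh2p : 0 < rh2) by apply Rpower_pos'.
  assert (Hrz2p : 0 < rz2) by apply Rpower_pos'.
  set (K := C * rk * rh * (t * rz) * (3 * z)).
  assert (HK : 0 <= K) by (unfold K; repeat apply Rmult_le_pos; lra).
  set (q := kappa * h / z).
  assert (Hq : 0 <= q <= 1/2).
  { unfold q. split. apply Rmult_le_pos; [nra|left; apply Rinv_0_lt_compat; lra].
    apply (Rmult_le_reg_r z); [lra|]. unfold Rdiv. rewrite Rmult_assoc, Rinv_l by lra. nra. }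
  assert (He : 0 <= e) by apply Hepp.
  assert (Hvs0 : 0 < vs).
  { destruct (Rle_or_lt vs 0) as [Hv|Hv]; [|exact Hv].
    assert (vs / C' <= 0).
    { unfold Rdiv. assert (0 < / C') by (apply Rinv_0_lt_compat; lra). nra. }
    assert (0 < rk2 * rh2) by nra.
    assert (vs / C' * rk2 * rh2 <= 0) by nra.
    nra. }
  assert (HF' : K * e * A ^ 2 <= q * vs / 16).
  { assert (H1 : K * e * A ^ 2 <= K * A ^ 2 * (vs / C' * rk2 * rh2 * rz2)).
    { assert (0 <= K * A^2) by (apply Rmult_le_pos; [lra|apply pow_le; lra]). nra. }
    assert (H2 : K * A ^ 2 * (vs / C' * rk2 * rh2 * rz2) = C / (C + 1) * (q * vs / 16)).
    { replace rk2 with (kappa / rk) by (rewrite <- Hrk; field; lra).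
      replace rh2 with (h / rh) by (rewrite <- Hrh; field; lra).
      replace rz2 with (/ (z^2) / rz) by (rewrite <- Hrz; field; lra).
      unfold K, C', q. field. repeat split; lra. }
    assert (C / (C + 1) <= 1).
    { apply (Rmult_le_reg_r (C + 1)); [lra|]. unfold Rdiv. rewrite Rmult_assoc, Rinv_l by lra. lra. }
    assert (0 <= q * vs / 16) by (unfold Rdiv; nra).
    nra. }
  assert (HF : K * e * A ^ 2 <= q) by nra.
  assert (Hcore := core K A q z e nu zeta eta eps HK HA Hq Hz0 He (Rle_refl _) Het0 eq_refl Hepp Hnup).
  assert (Hnu' : forall n, zeta n <= 2 * z -> eta n <= z -> nu n <= K * A ^ S n * eps n).
  { intros n H1 H2. eapply Rle_trans; [apply Hnu|].
    rewrite (rpow_pos kappa) by lra. rewrite rpow_pos by (unfold hseq; apply Rdiv_lt_0_compat; [lra|apply pow_lt; lra]).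
    rewrite rpow_hseq by lra. fold rk rh A.
    assert (Hx : rpow (zeta n) c <= t * rz) by (apply rpow_le; auto).
    assert (Hx0 : 0 <= rpow (zeta n) c).
    { unfold rpow. destruct (Req_EM_T (zeta n) 0); [destruct (Req_EM_T c 0); lra|left; apply Rpower_pos']. }
    assert (Hy : rpow (zeta n) c * (zeta n + eta n) <= (t * rz) * (3 * z)).
    { apply Rmult_le_compat; auto; [specialize (Hzp n); specialize (Hetp n); lra|lra]. }
    assert (HM : 0 <= C * rk * rh * A ^ S n * eps n).
    { repeat apply Rmult_le_pos; try lra. apply pow_le; lra. apply Hepp. }
    unfold K.
    replace (C * rk * (rh * A ^ S n) * rpow (zeta n) c * (zeta n + eta n) * eps n)
      with ((C * rk * rh * A ^ S n * eps n) * (rpow (zeta n) c * (zeta n + eta n))) by ring.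
    replace (C * rk * rh * (t * rz) * (3 * z) * A ^ S n * eps n)
      with ((C * rk * rh * A ^ S n * eps n) * ((t * rz) * (3 * z))) by ring.
    apply Rmult_le_compat_l; assumption. }
  specialize (Hcore Hnu' Hzs Hes Heps HF).
  intros n. destruct (Hcore n) as [G1 [G2 G3]].
  assert (HAn : 1 <= A ^ n) by (apply pow_R1_Rle; lra).
  assert (Hen := Hepp n).
  split.
  - fold q. nra.
  - intros Hzn.
    set (hh := (1/2)^n) in *.
    assert (Hh0 : 0 <= hh) by (apply pow_le; lra).
    assert (HD : K * A * e <= q * vs / 16).
    { assert (0 < A) by lra. apply (Rmult_le_reg_r A); [lra|].
      assert (K * A * e * A = K * e * A ^ 2) by ring.
      assert (0 <= q * vs / 16) by (unfold Rdiv; nra). nra. }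
    assert (HD0 : 0 <= K * A * e) by (assert (0 < A) by lra; repeat apply Rmult_le_pos; lra).
    assert (E1 : eta n <= q * vs / 8) by nra.
    assert (E2 : zeta n <= 2 * z).
    { assert (q * vs / 8 <= 1) by (unfold Rdiv; nra). nra. }
    assert (E3 : eta n * zeta n < vs).
    { assert (eta n * zeta n <= (q * vs / 8) * (2 * z)).
      { apply Rmult_le_compat; try lra; apply Hetp. }
      assert ((q * vs / 8) * (2 * z) = kappa * h * vs / 4) by (unfold q; field; lra).
      assert (kappa * h < 1) by nra. nra. }
    apply (Rmult_lt_reg_r (zeta n)); [lra|].
    unfold Rdiv. rewrite Rmult_assoc, Rinv_l by lra. lra.
Qed.
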